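(* For every $n\ge1$, finite set $A$ and $g\in\mathscr G_n(A)$, the simplicial set $\Gamma_g=\{x\in\Gamma(A)\mid\gamma(x)\le g\}$ (a simplicial subset of $\Gamma_n(A)$) has contractible geometric realisation $|\Gamma_g|$.
   Context: For a finite set $A$, $\Gamma(A)$ is the simplicial set whose $k$-simplices are sequences $x=(L_0,\dots,L_k)$ of linear orders on $A$, faces deleting and degeneracies repeating entries. For $a\neq b$, $w_x(a,b)$ is $1$ plus the number of $1\le i\le k$ such that the relative order of $a,b$ differs between $L_{i-1}$ and $L_i$; $\Gamma_n(A)$ is the simplicial subset of simplices with all weights $\le n$. $\gamma(x)$ is the complete directed graph on $A$ with edge $a\to b$ iff $a<b$ in $L_0$, of weight $w_x(a,b)$. $\mathscr G_n(A)$ is the poset of acyclic complete directed graphs on $A$ with edge weights in $\{1,\dots,n\}$ (exactly one directed weighted edge per two-element subset), ordered by $g\le h$ iff whenever $a\xrightarrow{v}b$ in $g$, either $a\xrightarrow{w}b$ in $h$ with $v\le w$ or $b\xrightarrow{w}a$ in $h$ with $v<w$. *)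

(* Defs.v *)
From HB Require Import structures.
From mathcomp Require Import all_boot all_order all_algebra generic_quotient.
From mathcomp Require Import all_classical all_reals.
From mathcomp Require Import topology_structure product_topology function_spaces
  subspace_topology subtype_topology sigT_topology quotient_topology
  num_topology matrix_topology normedtype.
Import numFieldTopology.Exports numFieldNormedType.Exports.
From Stdlib Require Import Relations.Relation_Operators.

Set Implicit Arguments.
Unset Strict Implicit.
Unset Printing Implicit Defensive.

Import Order.TTheory GRing.Theory Num.Theory.
Local Open Scope classical_set_scope.
Local Open Scope ring_scope.
Local Open Scope quotient_scope.

Definition is_linord (A : finType) (f : {ffun A * A -> bool}) : bool :=
  [&& [forall a, ~~ f (a, a)],
      [forall a, forall b, forall c, f (a, b) && f (b, c) ==> f (a, c)] &
      [forall a, forall b, (a != b) ==> f (a, b) || f (b, a)]].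

Definition linord (A : finType) := {f : {ffun A * A -> bool} | is_linord f}.

Definition lt_lo (A : finType) (L : linord A) (a b : A) : bool := val L (a, b).

(** * The simplicial set Gamma(A)
   A k-simplex is a sequence (L_0,...,L_k) of linear orders, represented by a
   nonempty [seq (linord A)] of size k+1; the simplicial operator associated to
   a monotone map theta : [m] -> [k] sends x to x o theta. *)

Definition weight (A : finType) (x : seq (linord A)) (a b : A) : nat :=
  1 + count (fun p : linord A * linord A => lt_lo p.1 a b != lt_lo p.2 a b)
            (zip x (behead x)).

Record wgraph (A : finType) := WGraph {
  wdir : rel A;
  wwt  : A -> A -> nat   (* wwt a b : weight of the edge a -> b (when present) *)
}.

Definition in_Gn (n : nat) (A : finType) (g : wgraph A) : Prop :=
  [/\ forall a, ~~ wdir g a a,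
      forall a b, a != b -> (wdir g a b (+) wdir g b a),
      forall a b, wdir g a b -> (1 <= wwt g a b <= n)%N &
      forall (a : A) (p : seq A), p != [::] -> path (wdir g) a p -> last a p != a].

Definition wg_le (A : finType) (g h : wgraph A) : bool :=
  [forall a, forall b, wdir g a b ==>
     ((wdir h a b && (wwt g a b <= wwt h a b)%N) ||
      (wdir h b a && (wwt g a b < wwt h b a)%N))].

Definition gamma (A : finType) (x : seq (linord A)) : wgraph A :=
  WGraph (fun a b => if x is L0 :: _ then lt_lo L0 a b else false)
         (fun a b => weight x a b).

Definition Gamma_g (A : finType) (g : wgraph A) (x : seq (linord A)) : bool :=
  (x != [::]) && wg_le (gamma x) g.

(** * Geometric realisation of a simplicial subset of Gamma(A)
   |X| = (coproduct over simplices x of Delta^{dim x}) / ~ where ~ is the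
   equivalence relation generated by (x o theta, t) ~ (x, theta_* t) for
   monotone theta. Points of Delta^k are represented as functions nat -> R
   supported on {0..k}, nonnegative with sum 1, topologised as a subspace of
   the product topology (which on this finite-dimensional set is the
   Euclidean one). *)

Section Realisation.
Variables (R : realType) (A : finType) (P : pred (seq (linord A))).

Definition simp_idx := {x : seq (linord A) | P x && (x != [::])}.

Definition stdsimplex (m : nat) : set {ptws nat -> R} :=
  [set t | (forall i, 0 <= t i) /\ (forall i, (m <= i)%N -> t i = 0) /\
           \sum_(i < m) t i = 1].

Definition real_pts := {x : simp_idx & set_type (stdsimplex (size (val x)))}.

Definition sget (T : Type) (s : seq T) (i : nat) : option T :=
  nth None (map Some s) i.

(* one generating identification: (x', t') with x' = x o theta,
   t = theta_* t' *)
Definition real_gen (p q : real_pts) : Prop :=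
  let x := val (projT1 p) in let t : nat -> R := set_val (projT2 p) in
  let x' := val (projT1 q) in let t' : nat -> R := set_val (projT2 q) in
  exists theta : nat -> nat,
    [/\ forall i j, (i <= j < size x')%N -> (theta i <= theta j)%N,
        forall i, (i < size x')%N -> (theta i < size x)%N,
        forall i, (i < size x')%N -> sget x' i = sget x (theta i) &
        forall j, t j = \sum_(i < size x' | theta i == j) t' i].

Definition real_equiv (p q : real_pts) : bool :=
  `[< clos_refl_sym_trans real_pts real_gen p q >].

Lemma real_equiv_refl : reflexive real_equiv.
Proof. by move=> p; apply/asboolP; exact: rst_refl. Qed.

Lemma real_equiv_sym : symmetric real_equiv.
Proof.
by move=> p q; apply/asboolP/asboolP; exact: rst_sym.
Qed.

Lemma real_equiv_trans : transitive real_equiv.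
Proof.
move=> q p r /asboolP Hpq /asboolP Hqr; apply/asboolP; exact: rst_trans Hpq Hqr.
Qed.

Definition real_equiv_rel := EquivRel real_equiv real_equiv_refl
  real_equiv_sym real_equiv_trans.

Definition realisation : topologicalType :=
  quotient_topology {eq_quot real_equiv_rel}.

End Realisation.

Definition contractible (R : realType) (X : topologicalType) : Prop :=
  exists (x0 : X) (H : X * R -> X),
    [/\ {within [set p : X * R | p.2 \in `[0, 1]], continuous H},
        forall x, H (x, 0) = x &
        forall x, H (x, 1) = x0].

(* Main.v *)
Require Import Defs.
From mathcomp Require Import all_boot all_reals.
From HB Require Import structures.
From mathcomp Require Import all_boot all_order all_algebra generic_quotient.
From mathcomp Require Import all_classical all_reals.
From mathcomp Require Import topology_structure product_topology function_spaces
  subspace_topology subtype_topology sigT_topology quotient_topology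
  num_topology matrix_topology normedtype.
From mathcomp Require Import order_topology nat_topology initial_topology
  compact pseudometric_structure.
From mathcomp Require Import lra.
Import numFieldTopology.Exports numFieldNormedType.Exports.
From Stdlib Require Import Relations.Relation_Operators.

Set Implicit Arguments.
Unset Strict Implicit.
Unset Printing Implicit Defensive.
Import Order.TTheory GRing.Theory Num.Theory.

Module M1.
Section Comb.
Variables (A : finType).

Lemma lo_irr (L : linord A) a : ~~ lt_lo L a a.
Proof. have /and3P [H _ _] := valP L; move/forallP: H => H; exact: H. Qed.

Lemma lo_trans (L : linord A) a b c : lt_lo L a b -> lt_lo L b c -> lt_lo L a c.
Proof.
have /and3P [_ H _] := valP L; move/forallP: H => H; rewrite /lt_lo => h1 h2.
by move: (H a) => /forallP /(_ b) /forallP /(_ c) /implyP; apply; rewrite h1 h2.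
Qed.

Lemma lo_tot (L : linord A) a b : a != b -> lt_lo L a b || lt_lo L b a.
Proof.
have /and3P [_ _ H] := valP L; move/forallP: H => H; rewrite /lt_lo => nab.
by move: (H a) => /forallP /(_ b) /implyP; apply.
Qed.

Lemma lo_asym (L : linord A) a b : a != b -> lt_lo L b a = ~~ lt_lo L a b.
Proof.
move=> nab; case h: (lt_lo L a b) => /=.
  by apply/negP => h2; move: (lo_irr L a); rewrite (lo_trans h h2).
by move: (lo_tot L nab); rewrite h.
Qed.

Lemma weight_sym (x : seq (linord A)) a b : a != b -> weight x a b = weight x b a.
Proof.
move=> nab; rewrite /weight; congr (_ + _); apply: eq_count => p /=.
by rewrite !(lo_asym _ nab); case: (lt_lo p.1 a b); case: (lt_lo p.2 a b).
Qed.

Lemma weight_cons2 (L L0 : linord A) y a b :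
  weight [:: L, L0 & y] a b = (lt_lo L a b != lt_lo L0 a b) + weight (L0 :: y) a b.
Proof. by rewrite /weight /= addnCA. Qed.

Variables (n : nat) (g : wgraph A) (Hg : in_Gn n g).

Lemma Lstar_proof : is_linord [ffun p : A * A => wdir g p.1 p.2].
Proof.
case: Hg => irr xo _ acyc.
apply/and3P; split.
- by apply/forallP => a; rewrite ffunE.
- apply/forallP => a; apply/forallP => b; apply/forallP => c; rewrite !ffunE /=.
  apply/implyP => /andP [hab hbc].
  have [eac|nac] := eqVneq a c.
    subst c; have := acyc a [:: b; a] isT; rewrite /= hab hbc /= eqxx.
    by move=> /(_ isT).
  move: (xo a c nac); case hac: (wdir g a c) => //= hca.
  by have := acyc a [:: b; c; a] isT; rewrite /= hab hbc hca eqxx => /(_ isT).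
- apply/forallP => a; apply/forallP => b; apply/implyP => nab; rewrite !ffunE /=.
  by move: (xo a b nab); case: (wdir g a b).
Qed.

Definition Lstar : linord A := exist (fun f => is_true (is_linord f)) _ Lstar_proof.

Lemma lt_Lstar a b : lt_lo Lstar a b = wdir g a b.
Proof. by rewrite /lt_lo /= ffunE. Qed.

Lemma Gamma_cone y : Gamma_g g y -> Gamma_g g (Lstar :: y).
Proof.
case: Hg => irr xo _ _.
case: y => [|L0 y] //= /andP [_ /forallP H]; apply/andP; split => //.
apply/forallP => a; apply/forallP => b; rewrite /= lt_Lstar; apply/implyP => gab.
have nab : a != b by apply: contraTneq gab => ->; rewrite irr.
have gba : wdir g b a = false by move: (xo a b nab); rewrite gab; case: (wdir g b a).
rewrite gab gba /= orbF weight_cons2 lt_Lstar gab.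
case h: (lt_lo L0 a b) => /=.
  by move: (H a) => /forallP /(_ b) /implyP /(_ h); rewrite /= gab gba /= orbF.
have h2 : lt_lo L0 b a by rewrite (lo_asym _ nab) h.
move: (H b) => /forallP /(_ a) /implyP /(_ h2); rewrite /= gab gba /=.
by rewrite add1n weight_sym // eq_sym.
Qed.

Lemma Gamma_star : Gamma_g g [:: Lstar].
Proof.
case: Hg => _ _ wts _.
apply/andP; split => //; apply/forallP => a; apply/forallP => b; rewrite /= lt_Lstar.
apply/implyP => gab; rewrite gab /= /weight /=.
by case/andP: (wts a b gab) => ->.
Qed.

End Comb.

End M1.
Import M1.

Module M2.
Local Open Scope classical_set_scope.
Local Open Scope ring_scope.
Local Open Scope quotient_scope.

Section Real.
Variables (R : realType) (A : finType) (n : nat) (g : wgraph A) (Hg : in_Gn n g).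
Local Notation P := (Gamma_g g).
Local Notation T := (real_pts R P).
Local Notation X := (realisation R P).
Local Notation L := (Lstar Hg).

Definition clamp (s : R) : R := Num.min (Num.max s 0) 1.

Lemma clamp01 s : 0 <= clamp s <= 1.
Proof.
rewrite /clamp; apply/andP; split.
  by rewrite le_min ler01 le_max lexx orbT.
by rewrite ge_min lexx orbT.
Qed.

Lemma clamp0 : clamp 0 = 0.
Proof. by rewrite /clamp maxxx; apply/min_idPl; exact: ler01. Qed.

Lemma clamp1 : clamp 1 = 1.
Proof. by rewrite /clamp (max_idPl ler01) minxx. Qed.

Definition conef (c : R) (t : nat -> R) : {ptws nat -> R} :=
  fun j => if j is j'.+1 then (1 - c) * t j' else c.

Lemma conef_simplex k c (t : {ptws nat -> R}) : 0 <= c <= 1 ->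
  stdsimplex k t -> stdsimplex k.+1 (conef c t).
Proof.
move=> /andP [c0 c1] [t0 [tk ts]]; split; [|split].
- by case=> [|j] //=; rewrite mulr_ge0 // subr_ge0.
- by case=> [|j] //= hj; rewrite tk ?mulr0.
- by rewrite big_ord_recl /= -mulr_sumr ts mulr1 addrC subrK.
Qed.

Definition idx_cone (y : simp_idx P) : simp_idx P.
Proof.
exists (L :: val y); apply/andP; split => //.
by have /andP [Py _] := valP y; exact: Gamma_cone.
Defined.

Definition Fpt (y : simp_idx P) (s : R)
  (t : set_type (stdsimplex (R:=R) (size (val y)))) :
  set_type (stdsimplex (R:=R) (size (val (idx_cone y)))) :=
  exist _ (conef (clamp s) (val t))
    (mem_set (conef_simplex (clamp01 s) (set_valP t))).

Definition F (p : T) (s : R) : T :=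
  existT _ (idx_cone (projT1 p)) (Fpt s (projT2 p)).

Lemma gen_cone p q s : real_gen p q -> real_gen (F p s) (F q s).
Proof.
case: p => y t; case: q => y' t' [theta [mono rng sg sm]].
have {}sm : forall j, sval t j = \sum_(i < size (sval y') | theta i == j) sval t' i := sm.
exists (fun i => if i is i'.+1 then (theta i').+1 else 0); split.
- case=> [|i] [|j] //= /andP [hij hj]; rewrite ltnS; apply: mono.
  by rewrite !ltnS in hij hj; rewrite hij hj.
- by case=> [|i] //= hi; rewrite ltnS; apply: rng.
- by case=> [|i] //= hi; exact: sg.
- move=> j; rewrite /= big_mkcond big_ord_recl /=.
  under eq_bigr => i _ do rewrite /bump leq0n add1n add0n.
  rewrite !set_valE /=.
  case: j => [|j] /=.
    by rewrite big1 ?addr0 // => i _.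
  rewrite add0r sm big_mkcond mulr_sumr; apply: eq_bigr => i _ /=.
  by rewrite eqSS; case: ifP; rewrite ?mulr0.
Qed.

Lemma sum_pick k j (f : nat -> R) :
  \sum_(i < k | (i : nat) == j) f i = if (j < k)%N then f j else 0.
Proof.
elim: k => [|k IH]; first by rewrite big_ord0 ltn0.
rewrite big_mkcond big_ord_recr /= -big_mkcond IH.
case: (ltngtP j k) => [hjk|hkj|->].
- by rewrite ltnS ltnW // addr0.
- by rewrite ltnS leqNgt hkj addr0.
- by rewrite ltnSn add0r.
Qed.

Lemma gen_face0 p : real_gen (F p 0) p.
Proof.
case: p => y t; exists S; split => //=.
- by move=> i j /andP [hij _]; rewrite ltnS.
- move=> j; rewrite !set_valE /= clamp0; case: j => [|j] /=.
    by rewrite big1.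
  under eq_bigl => i do rewrite eqSS.
  rewrite sum_pick subr0 mul1r; case: ifP => // /negbT; rewrite -leqNgt.
  by have [_ [tk _]] := set_valP t; apply: tk.
Qed.

Definition idx_star : simp_idx P.
Proof. by exists [:: L]; rewrite Gamma_star. Defined.

Definition estar : {ptws nat -> R} := fun j => if j is 0 then 1 else 0.

Lemma estar_simplex : stdsimplex 1 estar.
Proof.
split; [|split].
- by case=> [|j] //=; rewrite ler01.
- by case.
- by rewrite big_ord1.
Qed.

Definition zstar : T :=
  existT _ idx_star (exist _ estar (mem_set estar_simplex) :
    set_type (stdsimplex (R:=R) (size (val idx_star)))).

Lemma gen_apex p : real_gen (F p 1) zstar.
Proof.
case: p => y t; exists (fun=> 0%N); split => //=.
- by case.
- move=> j; rewrite !set_valE /= clamp1 big_mkcond big_ord_recl big_ord0 /=.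
  by rewrite addr0; case: j => [|j] //=; rewrite subrr mul0r.
Qed.

End Real.

End M2.
Import M2.

Module M3.
Local Open Scope classical_set_scope.
Local Open Scope ring_scope.
Local Open Scope quotient_scope.

Section Real3.
Variables (R : realType) (A : finType) (n : nat) (g : wgraph A) (Hg : in_Gn n g).
Local Notation P := (Gamma_g g).
Local Notation T := (real_pts R P).
Local Notation X := (realisation R P).
Local Notation F := (F (R:=R) Hg).

Lemma F_equiv p q s : real_equiv p q -> real_equiv (F p s) (F q s).
Proof.
move/asboolP => h; apply/asboolP.
elim: h => [a b /(gen_cone Hg s) h|a|a b _ IH|a b c _ IH1 _ IH2].
- exact: rst_step.
- exact: rst_refl.
- exact: rst_sym.
- exact: rst_trans IH1 IH2.
Qed.

Definition pi : T -> X := \pi_X.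

Lemma piP p q : real_equiv p q -> pi p = pi q.
Proof. by move=> h; apply/(@eqquotP _ _ ({eq_quot real_equiv_rel R P})). Qed.

Lemma piP' p q : pi p = pi q -> real_equiv p q.
Proof. by move=> h; apply/(@eqquotP _ _ ({eq_quot real_equiv_rel R P})). Qed.

Definition H (z : X * R) : X := pi (F (repr z.1) z.2).

Lemma HE p s : H (pi p, s) = pi (F p s).
Proof.
rewrite /H /=; apply: piP; apply: F_equiv; apply: piP'.
exact: reprK.
Qed.

Definition x0 : X := pi (zstar R Hg).

Lemma H0 x : H (x, 0) = x.
Proof.
rewrite -[x]reprK; set p := repr x.
rewrite (HE p 0); apply: piP; apply/asboolP; exact/rst_step/gen_face0.
Qed.

Lemma H1 x : H (x, 1) = x0.
Proof.
rewrite -[x]reprK; set p := repr x.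
rewrite (HE p 1); apply: piP; apply/asboolP; exact/rst_step/gen_apex.
Qed.

End Real3.

End M3.
Import M3.

Module M4.
Local Open Scope classical_set_scope.
Local Open Scope ring_scope.
Local Open Scope quotient_scope.

Section Real4.
Variables (R : realType) (A : finType) (n : nat) (g : wgraph A) (Hg : in_Gn n g).
Local Notation P := (Gamma_g g).
Local Notation T := (real_pts R P).
Local Notation X := (realisation R P).
Local Notation F := (F (R:=R) Hg).

Lemma clamp_cts : continuous (@clamp R).
Proof.
have -> : @clamp R = ((idfun \max cst 0) \min cst 1).
  by apply/funext => s.
apply: min_fun_continuous; last exact: cst_continuous.
apply: max_fun_continuous; last exact: cst_continuous.
by move=> x; exact: cvg_id.
Qed.

Variable (k : nat).
Local Notation S := (set_type (stdsimplex (R:=R) k)).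

Lemma val_cts j : continuous (fun t : S => val t j).
Proof.
move=> t.
apply: (@continuous_comp S {ptws nat -> R} R set_val (@proj nat (fun=> R) j) t).
  exact: (@initial_continuous S _ set_val).
exact: proj_continuous.
Qed.

Lemma coord_cts j :
  continuous (fun st : R * S => conef (clamp st.1) (val st.2) j).
Proof.
have hc : forall z : R * S, {for z, continuous (fun st : R * S => clamp st.1)}.
  move=> z; apply: (@continuous_comp _ _ _ fst (@clamp R) z).
    exact: cvg_fst.
  exact: clamp_cts.
move=> z; case: j => [|j].
  exact: hc.
have hv : {for z, continuous (fun st : R * S => val st.2 j)}.
  apply: (@continuous_comp _ _ _ snd (fun t : S => val t j) z).
    exact: cvg_snd.
  exact: val_cts.
apply: (@cvgM _ _ _ _ (fun st : R * S => 1 - clamp st.1) (fun st : R * S => val st.2 j)).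
  apply: cvgB; first exact: cvg_cst.
  exact: hc.
exact: hv.
Qed.

End Real4.

Section Real5.
Variables (R : realType) (A : finType) (n : nat) (g : wgraph A) (Hg : in_Gn n g).
Local Notation P := (Gamma_g g).
Local Notation T := (real_pts R P).
Local Notation X := (realisation R P).
Local Notation F := (F (R:=R) Hg).

Lemma Fpt_cts (y : simp_idx P) :
  continuous (fun st : R * set_type (stdsimplex (R:=R) (size (val y))) =>
                Fpt Hg st.1 st.2).
Proof.
apply: (@continuous_comp_initial _ _ _ set_val).
move=> z; apply/pointwise_cvgP => j.
have := @coord_cts R (size (val y)) j z. move=> h. rewrite nbhs_filterE. exact: h.
Qed.


Lemma pi_cts : continuous (@pi R A g).
Proof. exact: (@pi_continuous T {eq_quot real_equiv_rel R P}). Qed.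

Lemma G_cts (y : simp_idx P) :
  continuous (fun st : R * set_type (stdsimplex (R:=R) (size (val y))) =>
                pi (F (existT _ y st.2) st.1)).
Proof.
move=> z.
have h1 := @Fpt_cts y z.
have h2 := continuous_comp h1 (@existT_continuous _ (fun i : simp_idx P => (set_type (stdsimplex (R:=R) (size (val i))) : topologicalType)) (idx_cone Hg y) _).
have h3 := continuous_comp h2 (@pi_cts _).
exact: h3.
Qed.

End Real5.

End M4.
Import M4.

Module M5.
Local Open Scope classical_set_scope.
Local Open Scope ring_scope.
Local Open Scope quotient_scope.

Section Real6.
Variables (R : realType) (A : finType) (n : nat) (g : wgraph A) (Hg : in_Gn n g).
Local Notation P := (Gamma_g g).
Local Notation T := (real_pts R P).
Local Notation X := (realisation R P).
Local Notation F := (F (R:=R) Hg).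
Local Notation H := (@H R A n g Hg).
Local Notation pi := (@pi R A g).

Lemma H_cts : continuous H.
Proof.
move=> [x s0] U hU.
have [O [oO Ox] OU] : exists2 O, open_nbhs (H (x, s0)) O & O `<=` U.
  by move: hU; rewrite nbhsE.
have xE : x = pi (repr x) by rewrite /pi reprK.
move: Ox; rewrite xE; case: (repr x) => y t0 => Ox.
rewrite HE in Ox.
pose Gy := fun st : R * set_type (stdsimplex (R:=R) (size (val y))) =>
  pi (F (existT _ y st.2) st.1).
have hG : nbhs ((s0, t0) : R * _) (Gy @^-1` O).
  by apply: (@G_cts _ _ _ _ Hg y (s0, t0)); apply: open_nbhs_nbhs.
case: hG => -[A1 B1] /= [nA1 nB1] AB.
have [e e0 eA] := (nbhs_ballP s0 A1).1 nA1.
rewrite ball_itv in eA; have {}e0 : 0 < e := e0.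
pose d := e / 2.
have d0 : 0 < d by rewrite /d; lra.
have de : d < e by rewrite /d; lra.
pose K : set R := `[s0 - d, s0 + d]%classic.
have cK : compact K by exact: segment_compact.
have KA : forall s, K s -> A1 s.
  move=> s; rewrite /K /= in_itv /= => /andP [h1 h2]; apply: eA.
  rewrite /= in_itv /=; apply/andP; split.
    by lra.
  by lra.
have ballK : forall s, ball s0 d s -> K s.
  move=> s; rewrite ball_itv /K /= !in_itv /= => /andP [h1 h2].
  by rewrite (ltW h1) (ltW h2).
pose V : set X := [set x' | forall s, K s -> O (H (x', s))].
have Vx : V (pi (existT _ y t0)).
  move=> s Ks; rewrite HE; apply: (AB (s, t0)); split => /=.
    exact: KA.
  exact: nbhs_singleton.
have oV : open V.
  rewrite /open /=; apply/sigT_openP => i; rewrite openE => t Vt.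
  have hV : forall s, K s -> O (pi (F (existT _ i t) s)).
    by move=> s Ks; rewrite -HE; exact: Vt s Ks.
  pose Gi := fun st : R * set_type (stdsimplex (R:=R) (size (val i))) =>
    pi (F (existT _ i st.2) st.1).
  have cover : forall s, K s ->
      \forall s' \near s & t' \near nbhs t, O (Gi (s', t')).
    move=> s Ks.
    have := @G_cts _ _ _ _ Hg i (s, t) O.
    apply; apply: open_nbhs_nbhs; split => //; exact: hV.
  have := (compact_near_coveringP K).1 cK _ (nbhs t)
    (fun t' s => O (Gi (s, t'))) _ cover.
  move=> /(_ _) h; rewrite /interior /=; apply: filterS h => t' Kt' s Ks.
  suff : O (H (pi (existT _ i t'), s)) by []. 
  by rewrite HE; exact: Kt'.
exists (V, ball s0 d) => /=.
  split; [exact: (@open_nbhs_nbhs X _ V (conj oV Vx)) | exact: nbhsx_ballx].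
move=> [x' s'] /= [Vx' bs']; apply: OU; apply: Vx'; exact: ballK.
Qed.

End Real6.

End M5.
Import M5.

Theorem lemma6 (R : realType) (n : nat) (A : finType) (g : wgraph A) :
  (1 <= n)%N -> in_Gn n g ->
  contractible R (realisation R (Gamma_g g)).
Proof.
move=> _ Hg.
exists (x0 R Hg), (H (R:=R) Hg); split.
- apply: continuous_subspaceT; exact: H_cts.
- exact: H0.
- exact: H1.
Qed.
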